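(* Let $(X,d)\in\mathfrak U$ with $|X|\geqslant 2$, and suppose the diametral graph is $G_d=G[X_1,X_2]$ (complete bipartite with parts $X_1,X_2$). Considering the subspaces $(X_1,d)$ and $(X_2,d)$, we have $$\operatorname{Sp}(X)=\operatorname{Sp}(X_1)\cup\operatorname{Sp}(X_2)\cup\{\operatorname{diam}X\}$$ and $$\operatorname{Sp}(X_1)\cap\operatorname{Sp}(X_2)=\varnothing.$$
   Context: For a metric space $(X,d)$, $\operatorname{Sp}(X)=\{d(x,y): x,y\in X,\ x\neq y\}$ (empty for a one-point space) and $\operatorname{diam}X=\sup\{d(x,y):x,y\in X\}$. $\mathfrak U$ denotes the class of finite ultrametric spaces $X$ with $|\operatorname{Sp}(X)|=|X|-1$. The diametral graph $G_d$ of $(X,d)$ has vertex set $X$, with $\{u,v\}$ an edge iff $d(u,v)=\operatorname{diam}X$. $G[X_1,X_2]$ denotes the complete bipartite graph with parts $X_1,X_2$ (disjoint, nonempty, covering the vertex set; no edges inside a part, all edges between parts). *)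

(* Defs.v *)
(* A finite metric space is a finType T with a distance
   d : T -> T -> R into a real domain R; subspaces are subsets A : {set T}. *)
From mathcomp Require Import all_boot all_order all_algebra.
Set Implicit Arguments. Unset Strict Implicit. Unset Printing Implicit Defensive.
Import Order.TTheory GRing.Theory Num.Theory.
Local Open Scope ring_scope.

Definition is_ultrametric (R : realDomainType) (T : finType) (d : T -> T -> R) : Prop :=
  [/\ forall x y, 0 <= d x y,
      forall x y, (d x y == 0) = (x == y),
      forall x y, d x y = d y x
    & forall x y z, d x z <= Num.max (d x y) (d y z)].

Definition Sp (R : realDomainType) (T : finType) (d : T -> T -> R) (A : {set T}) : seq R :=
  undup [seq d p.1 p.2 | p <- enum [set p : T * T | (p.1 \in A) && (p.2 \in A) && (p.1 != p.2)]].

(* diam A = sup { d(x,y) : x, y in A } (0 for the empty set; d >= 0) *)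
Definition diam (R : realDomainType) (T : finType) (d : T -> T -> R) (A : {set T}) : R :=
  \big[Num.max/0]_(x in A) \big[Num.max/0]_(y in A) d x y.

Definition in_U (R : realDomainType) (T : finType) (d : T -> T -> R) : Prop :=
  is_ultrametric d /\ size (Sp d [set: T]) = (#|T| - 1)%N.

Definition diam_edge (R : realDomainType) (T : finType) (d : T -> T -> R) (u v : T) : bool :=
  (u != v) && (d u v == diam d [set: T]).

Definition is_complete_bipartite (T : finType) (e : T -> T -> bool) (X1 X2 : {set T}) : Prop :=
  [/\ X1 != set0, X2 != set0, [disjoint X1 & X2], X1 :|: X2 = [set: T]
    & forall u v, e u v = ((u \in X1) && (v \in X2)) || ((u \in X2) && (v \in X1))].

(* Main.v *)
Require Import Defs.
From mathcomp Require Import all_boot all_order all_algebra.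
From mathcomp Require Import zify.
Import Order.TTheory GRing.Theory Num.Theory.
Local Open Scope ring_scope.

Lemma arith_aux (a b x y : nat) : (0 < a)%N -> (x + y - 1 <= (b + a.-1).+1)%N ->
  (0 < x)%N -> (0 < y)%N -> (b + a <= x.-1 + y.-1)%N -> False.
Proof. move=> *; lia. Qed.

Section Aux.
Variables (R : realDomainType) (T : finType) (d : T -> T -> R).

Lemma SpP (A : {set T}) r :
  reflect (exists a b, [/\ a \in A, b \in A, a != b & r = d a b]) (r \in Sp d A).
Proof.
rewrite /Sp mem_undup; apply: (iffP mapP).
  move=> [[a b]]; rewrite mem_enum inE /= => /andP[/andP[ha hb] hab] ->.
  by exists a, b.
move=> [a [b [ha hb hab ->]]]; exists (a, b) => //.
by rewrite mem_enum inE /= ha hb hab.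
Qed.

Lemma Sp_uniq (A : {set T}) : uniq (Sp d A).
Proof. exact: undup_uniq. Qed.

Hypothesis ud : is_ultrametric d.

Lemma Sp_size n : forall A : {set T}, #|A| = n.+1 -> (size (Sp d A) <= n)%N.
Proof.
case: ud => d0 deq dsym dtri.
elim: n => [|n IH] A hA.
  have /cards1P[x ->] : #|A| == 1%N by rewrite hA.
  have -> : (0 = size (@nil R))%N by [].
  apply: uniq_leq_size; first exact: Sp_uniq.
  move=> r /SpP[a [b [ha hb hab _]]]; move: ha hb hab.
  by rewrite !inE => /eqP-> /eqP->; rewrite eqxx.
have : (0 < #|A|)%N by rewrite hA.
case/card_gt0P => p hp.
set B := A :\ p.
have hB : #|B| = n.+1 by move: (cardsD1 p A); rewrite hp hA => -[].
have : (0 < #|B|)%N by rewrite hB.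
case/card_gt0P => y1 hy1.
case: (@arg_minP _ R T y1 (mem B) (fun y => d p y) hy1) => y0 hy0 hmin.
set m := d p y0.
have key : forall b, b \in B -> (d p b \in Sp d B) || (d p b == m).
  move=> b hb; case: (eqVneq b y0) => [->|hby]; first by rewrite eqxx orbT.
  have hm := hmin b hb.
  case: (leP (d y0 b) m) => h.
    apply/orP; right; rewrite eq_le hm andbT.
    apply: le_trans (dtri p y0 b) _; by rewrite ge_max lexx.
  apply/orP; left; apply/SpP; exists y0, b; split => //; first by rewrite eq_sym.
  apply/eqP; rewrite eq_le; apply/andP; split.
    apply: le_trans (dtri p y0 b) _; rewrite ge_max lexx andbT; exact: ltW.
  have := dtri y0 p b; rewrite le_max (dsym y0 p) -/m => /orP[h2|//].
  by move: (lt_le_trans h h2); rewrite ltxx.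
have : (size (Sp d A) <= size (m :: Sp d B))%N.
  apply: uniq_leq_size; first exact: Sp_uniq.
  move=> r /SpP[a [b [ha hb hab ->]]]; rewrite inE.
  case: (eqVneq a p) => [ea|nea].
    subst a; have hb' : b \in B by rewrite !inE eq_sym hab.
    by case/orP: (key b hb') => ->; rewrite ?orbT.
  case: (eqVneq b p) => [eb|neb].
    subst b; have ha' : a \in B by rewrite !inE nea.
    by rewrite dsym; case/orP: (key a ha') => ->; rewrite ?orbT.
  apply/orP; right; apply/SpP; exists a, b; split => //; by rewrite !inE ?nea ?neb.
move=> /= h; have := IH B hB; lia.
Qed.

End Aux.

Theorem lemma6 (R : realDomainType) (T : finType) (d : T -> T -> R)
    (X1 X2 : {set T}) :
  in_U d -> (2 <= #|T|)%N ->
  is_complete_bipartite (diam_edge d) X1 X2 ->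
  (forall r : R, (r \in Sp d [set: T]) =
     [|| r \in Sp d X1, r \in Sp d X2 | r == diam d [set: T]])
  /\ (forall r : R, ~~ ((r \in Sp d X1) && (r \in Sp d X2))).
Proof.
move=> [ud hsz] h2 [n1 n2 dis cov he].
have inX : forall x, (x \in X1) || (x \in X2).
  move=> x; have : x \in X1 :|: X2 by rewrite cov inE.
  by rewrite inE.
have nboth : forall x, x \in X1 -> x \in X2 -> False.
  by move=> x h1 h2'; move/disjointFr: dis => /(_ x h1); rewrite h2'.
have cross : forall u v, u \in X1 -> v \in X2 -> (u != v) && (d u v == diam d [set: T]).
  by move=> u v hu hv; have := he u v; rewrite /diam_edge hu hv => ->.
have part1 : forall r : R, (r \in Sp d [set: T]) =
     [|| r \in Sp d X1, r \in Sp d X2 | r == diam d [set: T]].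
  move=> r; apply/idP/idP.
    move/SpP=> [a [b [_ _ hab ->]]].
    case/orP: (inX a) => ha; case/orP: (inX b) => hb.
    - by apply/orP; left; apply/SpP; exists a, b.
    - by case/andP: (cross a b ha hb) => _ ->; rewrite !orbT.
    - by case/andP: (cross b a hb ha) => _ /eqP <-; case: ud => _ _ -> _; rewrite eqxx !orbT.
    - by apply/orP; right; apply/orP; left; apply/SpP; exists a, b.
  case/or3P.
  - by move/SpP=> [a [b [ha hb hab ->]]]; apply/SpP; exists a, b; rewrite !inE.
  - by move/SpP=> [a [b [ha hb hab ->]]]; apply/SpP; exists a, b; rewrite !inE.
  move/eqP=> ->; case/set0Pn: n1 => u hu; case/set0Pn: n2 => v hv.
  case/andP: (cross u v hu hv) => huv /eqP <-.
  by apply/SpP; exists u, v; rewrite !inE.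
split => // r; apply/negP => /andP[r1 r2].
have c1 : (0 < #|X1|)%N by apply/card_gt0P; case/set0Pn: n1 => u hu; exists u.
have c2 : (0 < #|X2|)%N by apply/card_gt0P; case/set0Pn: n2 => u hu; exists u.
have s1 := @Sp_size _ _ d ud (#|X1|).-1 X1 ltac:(lia).
have s2 := @Sp_size _ _ d ud (#|X2|).-1 X2 ltac:(lia).
have sum : (#|X1| + #|X2| = #|T|)%N.
  move: dis; rewrite -setI_eq0 => /eqP hI.
  by rewrite -cardsUI cov hI cards0 addn0 cardsT.
have : (size (Sp d [set: T]) <= size (diam d [set: T] :: Sp d X1 ++ rem r (Sp d X2)))%N.
  apply: uniq_leq_size; first exact: Sp_uniq.
  move=> x; rewrite part1 inE mem_cat (mem_rem_uniq _ (@Sp_uniq _ _ d X2)) inE /=.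
  case/or3P=> [->|h|->]; rewrite ?orbT //.
  case: (eqVneq x r) => [->|nxr]; first by rewrite r1 orbT.
  by rewrite h !orbT.
rewrite /= size_cat (size_rem r2) hsz.
have : (0 < size (Sp d X2))%N by case: (Sp d X2) r2.
rewrite -sum => hp hle.
have : (size (Sp d X1) + size (Sp d X2) <= #|X1|.-1 + #|X2|.-1)%N by exact: leq_add.
move: hp hle c1 c2; clear.
set a := size _. set b := size _. set x := #|X1|. set y := #|X2|. move=> h1 h2 h3 h4 h5. exact: (arith_aux _ _ _ _ h1 h2 h3 h4 h5).
Qed.
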